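(* Let $\mathcal{D}=(\Omega,\mathcal{B})$ be a supersimple $2$-$(n,4,\lambda)$ design such that $(\Omega,\mathcal{C})$ is a regular two-graph, where $\mathcal{C}$ is the set of collinear triples of $\mathcal{D}$. Then $n=6\lambda-2s$, where $s$ is the number of coherent $4$-subsets of $\Omega$ containing a given element of $\mathcal{C}$ (this number being independent of the element). In particular, $n$ is even.
   Context: A $2$-$(n,4,\lambda)$ design $(\Omega,\mathcal{B})$: $n$ points, a multiset of $4$-subsets (lines), every $2$-subset in exactly $\lambda$ lines; supersimple: distinct lines meet in at most two points. Collinear triple: $3$-subset contained in a line. A $2$-$(n,3,\mu)$ design $(\Omega,\mathcal{C})$ is a regular two-graph if every $4$-subset of $\Omega$ contains exactly $0,2$ or $4$ members of $\mathcal{C}$. A subset $X\subseteq\Omega$ is coherent if every $3$-subset of $X$ lies in $\mathcal{C}$. *)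

(* Defs.v *)
From mathcomp Require Import all_boot.
Set Implicit Arguments. Unset Strict Implicit. Unset Printing Implicit Defensive.

Section Designs.
Variable T : finType.

(* A 2-(n,k,lam) design on the point set T (n = #|T|): the lines form a
   multiset, represented as a sequence of subsets; each line has k points and
   every 2-subset lies in exactly lam lines (counted with multiplicity). *)
Definition two_design (k lam : nat) (B : seq {set T}) : Prop :=
  all (fun b : {set T} => #|b| == k) B /\
  forall P : {set T}, #|P| = 2 -> count (fun b : {set T} => P \subset b) B = lam.

(* Supersimple: distinct lines (distinct members of the multiset, i.e.
   distinct positions in B) meet in at most two points. *)
Definition supersimple (B : seq {set T}) : Prop :=
  forall i j, i < size B -> j < size B -> i != j ->
    #|nth set0 B i :&: nth set0 B j| <= 2.

Definition collinear_triples (B : seq {set T}) : {set {set T}} :=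
  [set X : {set T} | (#|X| == 3) && has (fun b : {set T} => X \subset b) B].

Definition triple_design (C : {set {set T}}) : Prop :=
  (forall X, X \in C -> #|X| = 3) /\
  exists mu, forall P : {set T}, #|P| = 2 -> #|[set X in C | P \subset X]| = mu.

Definition regular_two_graph (C : {set {set T}}) : Prop :=
  triple_design C /\
  forall Y : {set T}, #|Y| = 4 -> #|[set X in C | X \subset Y]| \in [:: 0; 2; 4].

Definition coherent (C : {set {set T}}) (X : {set T}) : bool :=
  [forall Z : {set T}, ((Z \subset X) && (#|Z| == 3)) ==> (Z \in C)].

Definition n_coherent4 (C : {set {set T}}) (c : {set T}) : nat :=
  #|[set X : {set T} | [&& #|X| == 4, c \subset X & coherent C X]]|.

End Designs.

(* Main.v *)
Require Import Defs.
From mathcomp Require Import all_boot.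
From mathcomp Require Import zify.
Set Implicit Arguments. Unset Strict Implicit. Unset Printing Implicit Defensive.

Lemma sum_ind (T : finType) (A : {set T}) : \sum_(u : T) ((u \in A) : nat) = #|A|.
Proof.
rewrite -sum1_card [RHS]big_mkcond /=; apply: eq_bigr => u _; by case: (u \in A).
Qed.

Lemma sub3 (T : finType) (Y Z : {set T}) :
  #|Y| = 4 -> Z \subset Y -> #|Z| = 3 -> exists2 v, v \in Y & Z = Y :\ v.
Proof.
move=> HY HZY HZ.
have : #|Y :\: Z| == 1 by rewrite cardsDS // HY HZ.
case/cards1P => v Hv; exists v.
  have : v \in Y :\: Z by rewrite Hv set11.
  by rewrite inE => /andP[].
rewrite -Hv setDDr setDv set0U; by apply/esym/setIidPr.
Qed.

Lemma g4 (T : finType) (C : {set {set T}}) (Y : {set T}) :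
  (forall X, X \in C -> #|X| = 3) -> #|Y| = 4 ->
  #|[set X in C | X \subset Y]| = #|[set v in Y | Y :\ v \in C]|.
Proof.
move=> HC HY.
have -> : [set X in C | X \subset Y] = [set Y :\ v | v in [set v in Y | Y :\ v \in C]].
  apply/setP => X; rewrite inE; apply/andP/imsetP.
  - case=> XC XY; have [v vY EX] := sub3 HY XY (HC _ XC).
    by exists v => //; rewrite inE vY -EX XC.
  - case=> v; rewrite inE => /andP[vY vC] ->; split => //; exact: subD1set.
apply: card_in_imset => v w; rewrite !inE => /andP[vY _] /andP[wY _] E.
apply/eqP; apply/negPn/negP => nvw.
have : v \in Y :\ w. by rewrite !inE vY andbT.
by rewrite -E setD11.
Qed.

Lemma L1 (T : finType) (lam : nat) (B : seq {set T}) (P : {set T}) :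
  two_design 4 lam B -> supersimple B -> #|P| = 2 ->
  #|[set u | (u \notin P) && (u |: P \in collinear_triples B)]| = 2 * lam.
Proof.
move=> [H4 Hl] Hss HP.
set S := [set u | _].
have memS u : (u \in S) = (u \notin P) && has (fun b : {set T} => (P \subset b) && (u \in b)) B.
  rewrite !inE; case uP: (u \in P) => //=.
  rewrite cardsU1 uP HP /=; apply: eq_has => b.
  by rewrite subUset sub1set andbC.
pose b i := nth set0 B i.
pose F (u : T) (i : 'I_(size B)) : nat := (P \subset b i) * (u \in b i :\: P).
have H1 u : \sum_(i < size B) F u i = (u \in S).
  rewrite memS; case uP: (u \in P) => /=.
    by apply: big1 => i _; rewrite /F inE uP /= muln0.
  case: (has_nthP set0) => [[i0 Hi0 /andP[Pb ub]] | Hn].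
    rewrite (bigD1 (Ordinal Hi0)) //= big1 ?addn0.
      by rewrite /F /b Pb inE uP ub.
    move=> j nj; rewrite /F.
    case Pj: (P \subset b j) => //=; case uj: (u \in b j :\: P) => //=.
    exfalso.
    have nij : (j : nat) != i0.
      apply/eqP => E; move/eqP: nj; apply; apply: val_inj; exact: E.
    have := Hss j i0 (ltn_ord j) Hi0 nij.
    have : #|u |: P| <= #|b j :&: b i0|.
      apply: subset_leq_card; rewrite subsetI !subUset !sub1set Pj Pb ub andbT /=.
      by move: uj; rewrite inE => /andP[_ ->].
    rewrite cardsU1 uP HP /b => h1 h2.
    have := leq_trans h1 h2; by [].
  apply: big1 => i _; rewrite /F.
  case Pi: (P \subset b i) => //=; case ui: (u \in b i :\: P) => //=.
  exfalso; apply: Hn; exists i => //.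
  by move: ui; rewrite inE => /andP[_ ->]; rewrite andbT.
have H2 i : \sum_(u : T) F u i = (P \subset b i) * 2.
  rewrite /F -big_distrr /= sum_ind.
  case Pi: (P \subset b i); last by rewrite !mul0n.
  rewrite cardsDS // HP.
  by have /eqP -> := (allP H4) _ (mem_nth set0 (ltn_ord i)).
rewrite -sum_ind.
transitivity (\sum_(u : T) \sum_(i < size B) F u i).
  by apply: eq_bigr => u _; rewrite H1.
rewrite exchange_big /=.
transitivity (\sum_(i < size B) (P \subset b i) * 2).
  by apply: eq_bigr => i _; rewrite H2.
rewrite -big_distrl /= mulnC; congr (2 * _).
rewrite -(Hl P HP) -sum1_count (big_nth set0) big_mkord [RHS]big_mkcond.
by apply: eq_bigr => i _; rewrite /b; case: (P \subset _).
Qed.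

Lemma card_sep (T : finType) (A : {set T}) (p : pred T) :
  #|[set v in A | p v]| = \sum_(v in A) (p v : nat).
Proof.
rewrite -sum1_card [RHS]big_mkcond [LHS]big_mkcond /=; apply: eq_bigr => v _.
by rewrite inE; case: (v \in A); case: (p v).
Qed.

Lemma setU1D1 (T : finType) (c : {set T}) (u v : T) :
  v != u -> (u |: c) :\ v = u |: (c :\ v).
Proof.
move=> nvu; apply/setP => w; rewrite !inE.
case: (eqVneq w v) => [->|] //=; by rewrite (negbTE nvu).
Qed.

Lemma count_c (T : finType) (C : {set {set T}}) (lam : nat) (c : {set T}) :
  (forall X, X \in C -> #|X| = 3) ->
  (forall Y : {set T}, #|Y| = 4 -> #|[set X in C | X \subset Y]| \in [:: 0; 2; 4]) ->
  (forall P : {set T}, #|P| = 2 -> #|[set u | (u \notin P) && (u |: P \in C)]| = 2 * lam) ->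
  0 < lam -> c \in C -> #|T| + 2 * n_coherent4 C c = 6 * lam.
Proof.
move=> HC H24 HL Hlam cC.
have c3 := HC _ cC.
pose a u := #|[set v in c | u |: (c :\ v) \in C]|.
have card4 u : u \notin c -> #|u |: c| = 4 by move=> uc; rewrite cardsU1 uc c3.
have gY u : u \notin c -> #|[set v in u |: c | (u |: c) :\ v \in C]| = (a u).+1.
  move=> uc.
  have -> : [set v in u |: c | (u |: c) :\ v \in C] = u |: [set v in c | u |: (c :\ v) \in C].
    apply/setP => v; rewrite !inE.
    case: (eqVneq v u) => [-> | nvu] /=.
      by rewrite setU1K.
    by rewrite setU1D1.
  by rewrite cardsU1 inE (negbTE uc) /= add1n.
have a13 u : u \notin c -> (a u == 1) || (a u == 3).
  move=> uc; have := H24 (u |: c) (card4 u uc).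
  rewrite g4 // ?card4 // gY //.
  rewrite !inE; case: (a u) => [|[|[|[|n]]]] //.
have coh u : u \notin c -> coherent C (u |: c) = (a u == 3).
  move=> uc; apply/idP/idP.
    move=> /forallP H.
    have E : [set v in u |: c | (u |: c) :\ v \in C] = u |: c.
      apply/setP => v; rewrite inE; case vY: (v \in u |: c) => //=.
      have h3 : #|(u |: c) :\ v| == 3.
        by move: (cardsD1 v (u |: c)); rewrite vY card4 //; lia.
      by move/implyP: (H ((u |: c) :\ v)); rewrite subD1set h3; apply.
    by move: (gY u uc); rewrite E card4 // => [[->]].
  move=> /eqP h.
  have E : [set v in u |: c | (u |: c) :\ v \in C] = u |: c.
    apply/eqP; rewrite eqEcard; apply/andP; split.
      by apply/subsetP => v; rewrite inE => /andP[].
    by rewrite gY // h card4.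
  apply/forallP => Z; apply/implyP => /andP[ZY /eqP Z3].
  have [v vY ->] := sub3 (card4 u uc) ZY Z3.
  by move: vY; rewrite -{1}E inE => /andP[].
have Hsum : \sum_(u in ~: c) a u = 3 * (2 * lam - 1).
  transitivity (\sum_(u in ~: c) \sum_(v in c) ((u |: (c :\ v) \in C) : nat)).
    by apply: eq_bigr => u _; rewrite /a card_sep.
  rewrite exchange_big /=.
  transitivity (\sum_(v in c) (2 * lam - 1)); last by rewrite sum_nat_const c3.
  apply: eq_bigr => v vc.
  have P2 : #|c :\ v| = 2 by move: (cardsD1 v c); rewrite vc c3; lia.
  have := HL (c :\ v) P2.
  have -> : [set u | (u \notin c :\ v) && (u |: (c :\ v) \in C)] =
            v |: [set u in ~: c | u |: (c :\ v) \in C].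
    apply/setP => w; rewrite !inE.
    case: (eqVneq w v) => [->|nwv] /=.
      by rewrite setD1K // cC.
    by [].
  rewrite cardsU1 !inE vc /= add1n card_sep => h; lia.
have Hsplit : \sum_(u in ~: c) a u = #|~: c| + 2 * #|[set u in ~: c | a u == 3]|.
  transitivity (\sum_(u in ~: c) (1 + 2 * (a u == 3))).
    apply: eq_bigr => u; rewrite inE => uc.
    by have := a13 u uc; case/orP => /eqP ->.
  by rewrite big_split /= sum1_card -big_distrr /= card_sep.
have Hcoh : n_coherent4 C c = #|[set u in ~: c | a u == 3]|.
  rewrite /n_coherent4.
  have -> : [set X : {set T} | [&& #|X| == 4, c \subset X & coherent C X]] =
            [set u |: c | u in [set u in ~: c | a u == 3]].
    apply/setP => X; rewrite inE; apply/idP/imsetP.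
      case/and3P => /eqP X4 cX cohX.
      have : #|X :\: c| == 1 by rewrite cardsDS // X4 c3.
      case/cards1P => u Hu.
      have uX : u \in X :\: c by rewrite Hu set11.
      have uc : u \notin c by move: uX; rewrite inE => /andP[].
      have EX : X = u |: c.
        by rewrite -{1}(setID X c) (setIidPr cX) Hu setUC.
      exists u => //; rewrite !inE uc -coh // -EX //.
    case=> u; rewrite !inE => /andP[uc a3] ->.
    by rewrite cardsU1 uc c3 subsetUr coh // a3.
  apply: card_in_imset => u w; rewrite !inE => /andP[uc _] /andP[wc _] E.
  have : u \in w |: c by rewrite -E setU11.
  case/setU1P => // uc'; by rewrite uc' in uc.
have := cardsC c; rewrite c3 => HT.
move: Hsum; rewrite Hsplit -Hcoh => h.
lia.
Qed.

Theorem corollary2p4 (T : finType) (lam : nat) (B : seq {set T}) :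
  2 <= #|T| -> 0 < lam ->
  two_design 4 lam B -> supersimple B ->
  regular_two_graph (collinear_triples B) ->
  exists s : nat,
    (forall c, c \in collinear_triples B ->
       n_coherent4 (collinear_triples B) c = s) /\
    #|T| + 2 * s = 6 * lam /\ ~~ odd #|T|.
Proof.
move=> Hn Hlam HD Hss [[HC _] H24].
have HL : forall P : {set T}, #|P| = 2 ->
   #|[set u | (u \notin P) && (u |: P \in collinear_triples B)]| = 2 * lam.
  by move=> P HP; apply: L1.
have key c := count_c (c := c) HC H24 HL Hlam.
have [x [y [_ _ nxy]]] : exists x y : T, [/\ x \in T, y \in T & x != y].
  by apply/card_gt1P.
have P2 : #|[set x; y]| = 2 by rewrite cards2 nxy.
have [H4 Hl] := HD.
have : has (fun b : {set T} => [set x; y] \subset b) B by rewrite has_count Hl.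
case/hasP => b bB Pb.
have b4 : #|b| = 4 by apply/eqP; apply: (allP H4).
have [v vb] : exists v, v \in b.
  by apply/set0Pn; rewrite -card_gt0 b4.
have c0C : b :\ v \in collinear_triples B.
  rewrite inE; apply/andP; split.
    by move: (cardsD1 v b); rewrite vb b4; lia.
  by apply/hasP; exists b => //; apply: subD1set.
exists (n_coherent4 (collinear_triples B) (b :\ v)); split.
  move=> c cC; have := key c cC; have := key _ c0C; lia.
have := key _ c0C; split => //; lia.
Qed.
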